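(* Let $(e_n)$ be a uniformly quasi-greedy basic sequence in a Banach lattice $X$ with uniform quasi-greedy constant $C^\vee_{qg}$. Then: (i) for any distinct indices $n_1,\dots,n_m$, $\big\|\bigvee_{k=1}^m\big|\sum_{i=1}^k e_{n_i}\big|\big\|\le C^\vee_{qg}\big\|\sum_{i=1}^m e_{n_i}\big\|$; (ii) for any distinct indices $n_1,\dots,n_m$ and any signs $\varepsilon_i\in\{\pm1\}$, $(2C^\vee_{qg})^{-1}\big\|\bigvee_{k=1}^m\big|\sum_{i=1}^k e_{n_i}\big|\big\|\le\big\|\sum_{i=1}^m\varepsilon_ie_{n_i}\big\|\le\big\|\bigvee_{k=1}^m\big|\sum_{i=1}^k\varepsilon_ie_{n_i}\big|\big\|\le 2C^\vee_{qg}\big\|\sum_{i=1}^m e_{n_i}\big\|$.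
   Context: Let $(e_n)$ be a semi-normalized basic sequence in a Banach lattice $X$ with span $E$ and biorthogonal functionals $e_n^*$. For $x\in E$, the natural greedy ordering $\rho$ of $x$ is the injective map $\mathbb{N}\to\mathbb{N}$ whose range contains $\{n:e_n^*(x)\ne0\}$ and which lists indices by non-increasing $|e_n^*(x)|$, ties broken by increasing index; $\mathcal{G}_m(x)=\sum_{n=1}^m e^*_{\rho(n)}(x)e_{\rho(n)}$ and $\mathcal{G}^\vee_m(x)=\bigvee_{n=1}^m|\mathcal{G}_n(x)|$. The sequence is uniformly quasi-greedy if $C^\vee_{qg}:=\sup_m\sup_{x\in E,\|x\|=1}\|\mathcal{G}^\vee_m(x)\|<\infty$; $C^\vee_{qg}$ is the uniform quasi-greedy constant. (Equivalently, $\sup_m\|G^\vee_{\pi,m}(x)\|\le C^\vee_{qg}\|x\|$ for every greedy ordering $\pi$, where a greedy ordering is any injective $\pi$ whose range contains the support and with $|e^*_{\pi(n)}(x)|$ non-increasing, $G^\vee_{\pi,m}(x)=\bigvee_{n\le m}|\sum_{k\le n}e^*_{\pi(k)}(x)e_{\pi(k)}|$.) *)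

(* Defs.v *)
From HB Require Import structures.
From mathcomp Require Import all_boot all_order all_algebra.
From mathcomp Require Import all_classical all_reals all_analysis.
Set Implicit Arguments. Unset Strict Implicit. Unset Printing Implicit Defensive.
Import Order.TTheory GRing.Theory Num.Theory.
Import numFieldNormedType.Exports.
Local Open Scope classical_set_scope.
Local Open Scope ring_scope.

Record banach_lattice (R : realType) (X : completeNormedModType R) := BanachLattice {
  le : X -> X -> Prop;
  sup : X -> X -> X;
  le_refl : forall x, le x x;
  le_trans : forall x y z, le x y -> le y z -> le x z;
  le_antisym : forall x y, le x y -> le y x -> x = y;
  sup_ubl : forall x y, le x (sup x y);
  sup_ubr : forall x y, le y (sup x y);
  sup_least : forall x y z, le x z -> le y z -> le (sup x y) z;
  le_add : forall x y z, le x y -> le (x + z) (y + z);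
  le_scale : forall (a : R) x y, 0 <= a -> le x y -> le (a *: x) (a *: y);
  norm_monotone : forall x y, le (sup x (- x)) (sup y (- y)) -> `|x| <= `|y|
}.

Section Defs.
Variables (R : realType) (X : completeNormedModType R) (L : banach_lattice X).

Definition labs (x : X) : X := sup L x (- x).

Fixpoint bigsup (f : nat -> X) (m : nat) : X :=
  match m with
  | 0%N => f 0%N
  | k.+1 => sup L (bigsup f k) (f k.+1)
  end.
End Defs.

Section Basic.
Variables (R : realType) (X : completeNormedModType R).

Definition semi_normalized (e : nat -> X) : Prop :=
  exists a b : R, 0 < a /\ forall n, a <= `|e n| <= b.

Definition lin_span (e : nat -> X) : set X :=
  [set x | exists (N : nat) (a : nat -> R), x = \sum_(i < N) a i *: e i].
Definition closed_span (e : nat -> X) : set X := closure (lin_span e).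

Definition basic_seq (e : nat -> X) : Prop :=
  forall x, closed_span e x ->
    exists! a : nat -> R, (fun N => \sum_(i < N) a i *: e i) @ \oo --> x.

Definition coef_functionals (e : nat -> X) (es : nat -> X -> R) : Prop :=
  forall x, closed_span e x ->
    (fun N => \sum_(i < N) es i x *: e i) @ \oo --> x.

Definition natural_greedy (c : nat -> R) (rho : nat -> nat) : Prop :=
  injective rho /\
  (forall n, c n != 0 -> exists k, rho k = n) /\
  (forall i j, (i < j)%N ->
     `|c (rho j)| < `|c (rho i)| \/
     (`|c (rho j)| = `|c (rho i)| /\ (rho i < rho j)%N)).

Definition greedy_sum (e : nat -> X) (es : nat -> X -> R) (rho : nat -> nat)
  (x : X) (m : nat) : X :=
  \sum_(k < m) es (rho k) x *: e (rho k).
End Basic.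

Section Greedy.
Variables (R : realType) (X : completeNormedModType R) (L : banach_lattice X).

(* G^v_m(x) = |G_0(x)| v |G_1(x)| v ... v |G_m(x)|, with G_0(x) = 0
   (so that |G_0(x)| = 0 does not change the supremum for m >= 1). *)
Definition greedy_vee (e : nat -> X) (es : nat -> X -> R) (rho : nat -> nat)
  (x : X) (m : nat) : X :=
  bigsup L (fun n => labs L (greedy_sum e es rho x n)) m.

Definition uqg_set (e : nat -> X) (es : nat -> X -> R) : set (\bar R) :=
  [set r | exists (m : nat) (x : X) (rho : nat -> nat),
     [/\ closed_span e x, `|x| = 1, natural_greedy (fun n => es n x) rho &
         r = (`|greedy_vee e es rho x m|)%:E]].

Definition psum (e : nat -> X) (ns : seq nat) (eps : nat -> R) (k : nat) : X :=
  \sum_(i < k) eps i *: e (nth 0%N ns i).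

(* \/_{k=1}^m |sum_{i<=k} eps_i e_{n_i}| (the k = 0 term is |0| = 0) *)
Definition vee_psum (e : nat -> X) (ns : seq nat) (eps : nat -> R) : X :=
  bigsup L (fun k => labs L (psum e ns eps k)) (size ns).
End Greedy.

(* Main.v *)
Require Import Defs.
From HB Require Import structures.
From mathcomp Require Import all_boot all_order all_algebra.
From mathcomp Require Import all_classical all_reals all_analysis.
From mathcomp Require Import zify lra.
Import Order.TTheory GRing.Theory Num.Theory.
Import numFieldNormedType.Exports.
Local Open Scope ring_scope.
Section Lat.
Set Implicit Arguments.
Variables (R : realType) (X : completeNormedModType R) (L : banach_lattice X).
Local Notation "a <<= b" := (le L a b) (at level 70).

Lemma le_add2 {a b c d} : a <<= b -> c <<= d -> a + c <<= b + d.
Proof.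
move=> h1 h2; apply: (Defs.le_trans (le_add c h1)).
by rewrite (addrC b) (addrC b); apply: le_add.
Qed.

Lemma labs_ge x : x <<= labs L x. Proof. exact: sup_ubl. Qed.
Lemma labs_geN x : - x <<= labs L x. Proof. exact: sup_ubr. Qed.

Lemma labsD x y : labs L (x + y) <<= labs L x + labs L y.
Proof.
apply: sup_least; first by apply: le_add2; [apply: labs_ge|apply: labs_ge].
by rewrite opprD; apply: le_add2; apply: labs_geN.
Qed.

Lemma labsN x : labs L (- x) <<= labs L x.
Proof. by apply: sup_least; [apply: labs_geN | rewrite opprK; apply: labs_ge]. Qed.

Lemma labs_ge0 x : 0 <<= labs L x.
Proof.
have h := le_add2 (labs_ge x) (labs_geN x).
rewrite subrr in h.
have h2 : 0 <= (2^-1 : R) by rewrite invr_ge0.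
have := le_scale h2 h.
by rewrite scaler0 -mulr2n -scalerMnr scalerMnl -mulr_natr mulVf ?pnatr_eq0 // scale1r.
Qed.

Lemma labs_id {a} : 0 <<= a -> labs L a = a.
Proof.
move=> h; apply: le_antisym; last exact: labs_ge.
apply: sup_least; first exact: Defs.le_refl.
apply: (Defs.le_trans _ h).
have := le_add (- a) h; by rewrite add0r subrr.
Qed.

Lemma labs0 : labs L 0 = 0.
Proof. by apply: labs_id; apply: Defs.le_refl. Qed.

Lemma norm_mono {a b} : 0 <<= a -> a <<= b -> `|a| <= `|b|.
Proof.
move=> ha hab; apply: (@norm_monotone _ _ L).
have hb : 0 <<= b by exact: Defs.le_trans hab.
by move: (labs_id ha) (labs_id hb); rewrite /labs => -> ->.
Qed.

Lemma norm_labs x : `|labs L x| <= `|x|.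
Proof.
apply: (@norm_monotone _ _ L); move: (labs_id (labs_ge0 x)); rewrite /labs => ->.
exact: Defs.le_refl.
Qed.

Lemma labsZ (t : R) x : 0 <= t -> labs L (t *: x) <<= t *: labs L x.
Proof.
move=> ht; apply: sup_least; first by apply: le_scale => //; apply: labs_ge.
by rewrite -scalerN; apply: le_scale => //; apply: labs_geN.
Qed.

Lemma ge0D {a b} : 0 <<= a -> 0 <<= b -> 0 <<= a + b.
Proof. by move=> ha hb; rewrite -(addr0 0); apply: le_add2. Qed.

Lemma ge0Z (t : R) a : 0 <= t -> 0 <<= a -> 0 <<= t *: a.
Proof. by move=> ht ha; rewrite -(scaler0 _ t); apply: le_scale. Qed.

Lemma le_addr a b : 0 <<= b -> a <<= a + b.
Proof. by move=> hb; rewrite -{1}(addr0 a); apply: le_add2 => //; apply: Defs.le_refl. Qed.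

Lemma bigsup_ub f m k : (k <= m)%N -> f k <<= bigsup L f m.
Proof.
elim: m => [|m IH]; first by rewrite leqn0 => /eqP ->; apply: Defs.le_refl.
rewrite leq_eqVlt => /orP [/eqP -> | ]; first exact: sup_ubr.
by rewrite ltnS => /IH h; apply: Defs.le_trans h _; apply: sup_ubl.
Qed.

Lemma bigsup_least f m z : (forall k, (k <= m)%N -> f k <<= z) -> bigsup L f m <<= z.
Proof.
elim: m => [|m IH] h /=; first exact: h.
apply: sup_least; last exact: h.
by apply: IH => k hk; apply: h; rewrite (leq_trans hk).
Qed.

Lemma sum_ge0 (I : Type) (r : seq I) (F : I -> X) : (forall i, 0 <<= F i) -> 0 <<= \sum_(i <- r) F i.
Proof.
move=> h; elim: r => [|a r IH]; first by rewrite big_nil; apply: Defs.le_refl.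
by rewrite big_cons; apply: ge0D.
Qed.

Lemma sum_ge_term (n : nat) (F : 'I_n -> X) (i : 'I_n) : (forall i, 0 <<= F i) -> F i <<= \sum_(j < n) F j.
Proof.
move=> h; rewrite (bigD1 i) //=; apply: le_addr.
rewrite -big_filter; apply: sum_ge0 => //.
Qed.
Lemma norm_labs' x : `|x| <= `|labs L x|.
Proof.
apply: (@norm_monotone _ _ L); move: (labs_id (labs_ge0 x)); rewrite /labs => ->.
exact: Defs.le_refl.
Qed.
End Lat.
Section Main.
Variables (R : realType) (X : completeNormedModType R) (L : banach_lattice X)
  (e : nat -> X) (es : nat -> X -> R).
Hypothesis Hbasic : basic_seq e.
Hypothesis Hcoef : coef_functionals e es.

Lemma coef (a : nat -> R) N x : x = \sum_(i < N) a i *: e i ->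
  (forall i, (N <= i)%N -> a i = 0) -> forall n, es n x = a n.
Proof.
move=> hx ha0.
have hspan : closed_span e x by apply: subset_closure; exists N, a.
have [b [hb huniq]] := Hbasic hspan.
have h1 := huniq (fun i => es i x) (Hcoef hspan).
have h2 : ((fun K => \sum_(i < K) a i *: e i) @ \oo --> x)%classic.
  apply: cvg_near_cst; exists N => // K /= hK.
  rewrite hx (big_ord_widen K (fun i => a i *: e i) hK) [RHS]big_mkcond.
  apply: eq_bigr => i _; case: ifP => // /negbT; rewrite -leqNgt => /ha0 ->.
  by rewrite scale0r.
have h3 := huniq a h2.
by move=> n; rewrite -[es n x]/((fun i => es i x) n) -h1 h3.
Qed.

Lemma rep (ns : seq nat) (w : nat -> R) : uniq ns ->
  (forall j, (j < size ns)%N -> es (nth 0%N ns j) (psum e ns w (size ns)) = w j) /\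
  (forall n, n \notin ns -> es n (psum e ns w (size ns)) = 0) /\ closed_span e (psum e ns w (size ns)).
Proof.
move=> hu; set y := psum e ns w (size ns).
set m := size ns.
set M := (\max_(n <- ns) n).+1.
have hM : forall j, (j < m)%N -> (nth 0%N ns j < M)%N.
  by move=> j hj; rewrite ltnS; apply: (@leq_bigmax_seq _ ns xpredT (fun n => n)) => //; exact: mem_nth.
pose a n := \sum_(j < m) (if nth 0%N ns j == n then w j else 0).
have hy : y = \sum_(i < M) a i *: e i.
  rewrite /a; under eq_bigr do rewrite scaler_suml.
  rewrite exchange_big /y /psum; apply: eq_bigr => j _.
  rewrite (bigD1 (Ordinal (hM j (ltn_ord j)))) //= eqxx big1 ?addr0 //.
  move=> i hi; rewrite ifN ?scale0r //; apply: contra hi => /eqP h.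
  by apply/eqP; apply: val_inj; rewrite /= h.
have ha0 : forall i, (M <= i)%N -> a i = 0.
  move=> i hi; apply: big1 => j _; rewrite ifN //; apply/eqP => h.
  by have := hM j (ltn_ord j); rewrite h ltnNge hi.
have hc := @coef a M y hy ha0.
split; last split; last by apply: subset_closure; exists M, a.
  move=> j0 hj0; rewrite hc /a (bigD1 (Ordinal hj0)) //= eqxx big1 ?addr0 //.
  by move=> j hj; rewrite ifN // nth_uniq.
move=> n hn; rewrite hc /a big1 // => j _; rewrite ifN //.
by apply: contra hn => /eqP <-; apply: mem_nth.
Qed.
Variable C : R.
Hypothesis HC : (C%:E = ereal_sup (uqg_set L e es))%E.

Lemma UB x rho m : closed_span e x -> `|x| = 1 ->
  natural_greedy (fun n => es n x) rho -> `|greedy_vee L e es rho x m| <= C.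
Proof.
move=> h1 h2 h3.
have : (uqg_set L e es) (`|greedy_vee L e es rho x m|)%:E.
  by exists m, x, rho; split.
move/ereal_sup_ubound; by rewrite -HC lee_fin.
Qed.

Lemma es0 n : es n 0 = 0.
Proof. by apply: (@coef (fun _ => 0) 0%N 0) => //; rewrite big_ord0. Qed.

Lemma psum_lin ns (c q : nat -> R) (d : R) k :
  psum e ns (fun i => c i + d * q i) k = psum e ns c k + d *: psum e ns q k.
Proof.
rewrite /psum scaler_sumr -big_split /=; apply: eq_bigr => i _.
by rewrite scalerDl scalerA.
Qed.

Lemma psum0 ns c : psum e ns c 0 = 0.
Proof. by rewrite /psum big_ord0. Qed.
Lemma key_step ns c (d : R) : uniq ns ->
  (forall i, (i < size ns)%N -> c i = 1 \/ c i = -1) -> (0 < size ns)%N -> 0 < d ->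
  `|vee_psum L e ns c| <= C * `|psum e ns c (size ns)| +
    d * (C * `|psum e ns (fun i => c i * (size ns - i)%:R) (size ns)| +
         `|\sum_(k < (size ns).+1) labs L (psum e ns (fun i => c i * (size ns - i)%:R) k)|).
Proof.
move=> hu hc hm0 hd.
set m := size ns in hc hm0 *.
set q := (fun i => c i * (m - i)%:R).
set D := \sum_(k < m.+1) _.
pose cd i := c i + d * q i.
pose y' := psum e ns cd m.
have hnc : forall i, (i < m)%N -> `|c i| = 1.
  by move=> i hi; case: (hc i hi) => ->; rewrite ?normrN normr1.
have hcdpos : forall i, (i < m)%N -> 0 < 1 + d * (m - i)%:R.
  by move=> i hi; apply: (lt_le_trans ltr01); rewrite lerDl mulr_ge0 // ltW.
have hcd : forall i, (i < m)%N -> `|cd i| = 1 + d * (m - i)%:R.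
  move=> i hi; rewrite /cd /q mulrCA -{1}(mulr1 (c i)) -mulrDr normrM hnc // mul1r.
  by rewrite ger0_norm // ltW // hcdpos.
have [hrep1 [hrep2 hrep3]] := @rep ns cd hu.
have hy'0 : y' != 0.
  apply/eqP => h0; have := hrep1 0%N hm0.
  move=> h; have := hcdpos 0%N hm0.
  by rewrite -hcd // -h -/m -/y' h0 es0 normr0 ltxx.
set t := `|y'|^-1.
have ht : 0 < t by rewrite invr_gt0 normr_gt0.
pose x := t *: y'.
have hx : x = psum e ns (fun j => t * cd j) m.
  by rewrite /x /y' /psum scaler_sumr; apply: eq_bigr => j _; rewrite scalerA.
have [hx1 [hx2 hx3]] := @rep ns (fun j => t * cd j) hu.
rewrite -hx in hx1 hx2 hx3.
have hxn : `|x| = 1 by rewrite normrZ ger0_norm ?ltW // mulVf // normr_eq0.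
set M := (\max_(n <- ns) n).+1.
have hM : forall j, (j < m)%N -> (nth 0%N ns j < M)%N.
  by move=> j hj; rewrite ltnS; apply: (@leq_bigmax_seq _ ns xpredT (fun n => n)) => //; exact: mem_nth.
have hMn : forall n, (M <= n)%N -> n \notin ns.
  move=> n hn; apply/negP => hin.
  have h := @leq_bigmax_seq _ ns xpredT (fun n => n) n hin isT.
  by have := leq_ltn_trans h (ltnSn _); rewrite -/M ltnNge hn.
pose rho j := if (j < m)%N then nth 0%N ns j else (M + j)%N.
have hg : natural_greedy (fun n => es n x) rho.
  split; [|split].
  - move=> i j; rewrite /rho; case: ifP => hi; case: ifP => hj.
    + by move/eqP; rewrite nth_uniq // => /eqP.
    + by move=> h; have := hM i hi; rewrite h ltnNge leq_addr.
    + by move=> h; have := hM j hj; rewrite -h ltnNge leq_addr.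
    + by move/eqP; rewrite eqn_add2l => /eqP.
  - move=> n hn.
    have hin : n \in ns.
      by apply/negPn/negP => /hx2 h; rewrite h eqxx in hn.
    by exists (index n ns); rewrite /rho index_mem hin nth_index.
  - move=> i j hij; rewrite /rho; case: (ltnP j m) => hj.
    + have hi : (i < m)%N by apply: ltn_trans hj.
      rewrite hi !hx1 // !normrM (ger0_norm (ltW ht)) !hcd //; left.
      rewrite ltr_pM2l // ltrD2l ltr_pM2l // ltr_nat; lia.
    + rewrite hx2; last by apply: hMn; rewrite leq_addr.
      case: (ltnP i m) => hi.
      * left; rewrite hx1 // normr0 normrM (ger0_norm (ltW ht)) hcd //.
        by rewrite mulr_gt0 // hcdpos.
      * rewrite hx2; last by apply: hMn; rewrite leq_addr.
        by right; split => //; rewrite ltn_add2l.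
have hgs : forall k, (k <= m)%N -> greedy_sum e es rho x k = t *: psum e ns cd k.
  move=> k hk; rewrite /greedy_sum /psum scaler_sumr; apply: eq_bigr => j _.
  have hj : (j < m)%N := leq_trans (ltn_ord j) hk.
  by rewrite /rho hj hx1 // scalerA.
have hub := UB m hx3 hxn hg.
set gv := greedy_vee L e es rho x m in hub.
have hP' : forall k, (k <= m)%N -> le L (labs L (psum e ns cd k)) (`|y'| *: gv).
  move=> k hk.
  have -> : psum e ns cd k = `|y'| *: greedy_sum e es rho x k.
    by rewrite hgs // scalerA mulfV ?normr_eq0 // scale1r.
  apply: Defs.le_trans (labsZ L _ _ (normr_ge0 _)) _; apply: le_scale => //.
  rewrite /gv /greedy_vee.
  exact: (@bigsup_ub _ _ L (fun n => labs L (greedy_sum e es rho x n)) _ _ hk).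
have hP : forall k, (k <= m)%N -> le L (labs L (psum e ns c k)) (`|y'| *: gv + d *: D).
  move=> k hk.
  have -> : psum e ns c k = psum e ns cd k - d *: psum e ns q k.
    by rewrite /cd psum_lin addrK.
  apply: Defs.le_trans (labsD L _ _) _; apply: le_add2; first exact: hP'.
  apply: Defs.le_trans (labsN _ _) _.
  apply: Defs.le_trans (labsZ L _ _ (ltW hd)) _; apply: le_scale; first exact: ltW.
  have hk' : (k < m.+1)%N by [].
  exact: (sum_ge_term L (fun k : 'I_m.+1 => labs L (psum e ns q k)) (Ordinal hk') (fun _ => labs_ge0 _ _)).
have hV : le L (vee_psum L e ns c) (`|y'| *: gv + d *: D).
  exact: bigsup_least.
have hV0 : le L 0 (vee_psum L e ns c).
  apply: Defs.le_trans (labs_ge0 _ (psum e ns c 0)) _.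
  exact: (@bigsup_ub _ _ L (fun k => labs L (psum e ns c k)) _ _ (leq0n m)).
have h1 := norm_mono L hV0 hV.
have h1' := le_trans h1 (ler_normD _ _).
rewrite !normrZ (ger0_norm (normr_ge0 _)) (ger0_norm (ltW hd)) in h1'.
have hC0 : 0 <= C := le_trans (normr_ge0 _) hub.
have h3 : `|y'| <= `|psum e ns c m| + d * `|psum e ns q m|.
  by rewrite /y' /cd psum_lin; apply: le_trans (ler_normD _ _) _; rewrite normrZ ger0_norm // ltW.
have hy'n := normr_ge0 y'.
have hDn := normr_ge0 D.
have hgvn := normr_ge0 gv.
move: h1' hub h3 hy'n hDn hgvn hC0 hd.
set a1 := `|vee_psum L e ns c|. set a2 := `|y'|. set a3 := `|gv|. set a4 := `|D|.
set a5 := `|psum e ns c m|. set a6 := `|psum e ns q m|.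
move=> *; nra.
Qed.

Lemma key ns c : uniq ns -> (forall i, (i < size ns)%N -> c i = 1 \/ c i = -1) ->
  `|vee_psum L e ns c| <= C * `|psum e ns c (size ns)|.
Proof.
move=> hu hc; case: (posnP (size ns)) => hm.
  by rewrite /vee_psum hm /= psum0 labs0 normr0 mulr0.
apply/ler_addgt0Pr => eps heps.
have step := @key_step ns c _ hu hc hm.
set K := (C * _ + _) in step.
have hK0 := normr_ge0 K.
have hK : K <= `|K| := ler_norm K.
have hK1 : 0 < `|K| + 1 by lra.
set d := eps / (`|K| + 1).
have hd : 0 < d by rewrite divr_gt0.
have hdd : d * (`|K| + 1) = eps by rewrite divfK // gt_eqF.
apply: le_trans (step d hd) _; rewrite lerD2l.
nra.
Qed.

Lemma sum_take (s : seq nat) j (F : nat -> X) : (j <= size s)%N ->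
  \sum_(i < j) F (nth 0%N s i) = \sum_(x <- take j s) F x.
Proof.
move=> hj; rewrite (big_nth 0%N) size_takel // big_mkord.
by apply: eq_bigr => i _; rewrite nth_take.
Qed.

Lemma sum_iota m (F : nat -> X) (P : pred nat) :
  \sum_(x <- iota 0 m | P x) F x = \sum_(i < m | P i) F i.
Proof. by rewrite -big_mkord /index_iota subn0. Qed.

Lemma reorder ns (g : nat -> R) (p : pred nat) : uniq ns ->
  (forall i, (i < size ns)%N -> g i = 1 \/ g i = -1) ->
  exists ns' c', [/\ uniq ns', (forall i, (i < size ns')%N -> c' i = 1 \/ c' i = -1),
    psum e ns' c' (size ns') = psum e ns g (size ns) &
    forall k, (k <= size ns)%N -> exists j, (j <= size ns')%N /\
      psum e ns' c' j = \sum_(i < k | p i) g i *: e (nth 0%N ns i)].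
Proof.
move=> hu hg; set m := size ns in hg *.
pose ps := [seq x <- iota 0 m | p x] ++ [seq x <- iota 0 m | predC p x].
have hperm : perm_eq ps (iota 0 m) by rewrite /ps perm_filterC.
have hps : forall x, x \in ps -> (x < m)%N.
  by move=> x; rewrite (perm_mem hperm) mem_iota.
have hsz : size ps = m by rewrite (perm_size hperm) size_iota.
exists (map (nth 0%N ns) ps), (fun j => g (nth 0%N ps j)).
have hsum : forall j, (j <= m)%N -> psum e (map (nth 0%N ns) ps) (fun j => g (nth 0%N ps j)) j =
    \sum_(x <- take j ps) g x *: e (nth 0%N ns x).
  move=> j hj; rewrite /psum -(@sum_take ps j (fun x => g x *: e (nth 0%N ns x))); last by rewrite hsz.
  apply: eq_bigr => i _; rewrite (nth_map 0%N) //.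
  by rewrite hsz (leq_trans (ltn_ord i)).
rewrite size_map hsz; split.
- rewrite map_inj_in_uniq; first by rewrite (perm_uniq hperm) iota_uniq.
  move=> x y hx hy /eqP; rewrite nth_uniq //; [by move/eqP | exact: hps | exact: hps].
- by move=> i hi; apply: hg; apply: hps; rewrite mem_nth // hsz.
- by rewrite hsum // take_oversize ?hsz // (perm_big _ hperm) sum_iota.
- move=> k hk; exists (size [seq x <- iota 0 k | p x]); split.
    by rewrite size_filter (leq_trans (count_size _ _)) // size_iota.
  have hsplit : iota 0 m = iota 0 k ++ iota k (m - k) by rewrite -{1}(subnKC hk) iotaD.
  rewrite hsum; last by rewrite size_filter (leq_trans (count_size _ _)) // size_iota.
  rewrite /ps hsplit filter_cat -catA take_size_cat //.
  by rewrite big_filter sum_iota.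
Qed.

Lemma split_bound ns (g h : nat -> R) (p : pred nat) : uniq ns ->
  (forall i, (i < size ns)%N -> g i = 1 \/ g i = -1) ->
  (forall i, (i < size ns)%N -> if p i then h i = g i else h i = - g i) ->
  `|vee_psum L e ns h| <= 2 * C * `|psum e ns g (size ns)|.
Proof.
move=> hu hg hhg.
have [ns1 [c1 [hu1 hc1 hs1 hk1]]] := @reorder ns g p hu hg.
have [ns2 [c2 [hu2 hc2 hs2 hk2]]] := @reorder ns g (predC p) hu hg.
have hb1 := @key ns1 c1 hu1 hc1; rewrite hs1 in hb1.
have hb2 := @key ns2 c2 hu2 hc2; rewrite hs2 in hb2.
have hle : le L (vee_psum L e ns h) (vee_psum L e ns1 c1 + vee_psum L e ns2 c2).
  apply: bigsup_least => k hk.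
  have [j1 [hj1 e1]] := hk1 k hk.
  have [j2 [hj2 e2]] := hk2 k hk.
  have -> : psum e ns h k = psum e ns1 c1 j1 - psum e ns2 c2 j2.
    rewrite e1 e2 /psum (bigID (fun i : 'I_k => p i)) /= -sumrN; congr (_ + _); apply: eq_bigr => i hi.
      have him : (i < size ns)%N := leq_trans (ltn_ord i) hk.
      by move: (hhg i him); rewrite hi => ->.
    have him : (i < size ns)%N := leq_trans (ltn_ord i) hk.
    by move: (hhg i him); rewrite (negbTE hi) => ->; rewrite scaleNr.
  apply: Defs.le_trans (labsD L _ _) _; apply: le_add2.
    exact: (@bigsup_ub _ _ L (fun k => labs L (psum e ns1 c1 k)) _ _ hj1).
  apply: Defs.le_trans (labsN L _) _.
  exact: (@bigsup_ub _ _ L (fun k => labs L (psum e ns2 c2 k)) _ _ hj2).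
have h0 : le L 0 (vee_psum L e ns h).
  exact: Defs.le_trans (labs_ge0 L _) (@bigsup_ub _ _ L _ _ 0 (leq0n _)).
have := le_trans (norm_mono L h0 hle) (ler_normD _ _).
move: hb1 hb2; set a := `|vee_psum L e ns1 c1|; set b := `|vee_psum L e ns2 c2|.
set y := `|psum e ns g (size ns)|; move=> *; nra.
Qed.

End Main.

Theorem proposition3p21 (R : realType) (X : completeNormedModType R)
  (L : banach_lattice X) (e : nat -> X) (es : nat -> X -> R) (C : R) :
  semi_normalized e -> basic_seq e -> coef_functionals e es ->
  (C%:E = ereal_sup (uqg_set L e es))%E ->
  (forall ns : seq nat, uniq ns ->
     `|vee_psum L e ns (fun _ => 1)| <= C * `|psum e ns (fun _ => 1) (size ns)|)
  /\
  (forall (ns : seq nat) (eps : nat -> R), uniq ns ->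
     (forall i, (i < size ns)%N -> eps i = 1 \/ eps i = -1) ->
     [/\ (2 * C)^-1 * `|vee_psum L e ns (fun _ => 1)| <= `|psum e ns eps (size ns)|,
         `|psum e ns eps (size ns)| <= `|vee_psum L e ns eps| &
         `|vee_psum L e ns eps| <= 2 * C * `|psum e ns (fun _ => 1) (size ns)|]).
Proof.
move=> _ Hb Hc HC; split.
  by move=> ns hu; apply: (key L Hb Hc HC ns (fun _ => 1) hu) => i _; left.
move=> ns eps hu heps; split.
- have H : forall i, (i < size ns)%N -> if eps i == 1 then (1 : R) = eps i else 1 = - eps i.
    move=> i hi; case: (heps i hi) => ->; first by rewrite eqxx.
    by case: ifP => [/eqP h|_]; [exfalso; clear HC; lra | rewrite opprK].
  have hsb := split_bound L Hb Hc HC ns eps (fun _ => 1) (fun i => eps i == 1) hu heps H.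
  have ha := normr_ge0 (vee_psum L e ns (fun _ => 1)).
  have hy := normr_ge0 (psum e ns eps (size ns)).
  move: hsb ha hy.
  set a := `|vee_psum L e ns (fun _ => 1)|; set b := `|psum e ns eps (size ns)|.
  move=> hsb ha hy; clear HC.
  case: (ltP 0 C) => hC.
    have hw : (2 * C)^-1 * (2 * C) = 1 by rewrite mulVf // mulf_neq0 ?gt_eqF.
    have hw0 : 0 < (2 * C)^-1 by rewrite invr_gt0 mulr_gt0.
    move: hw hw0; set w := (2 * C)^-1 => hw hw0; nra.
  have hw0 : (2 * C)^-1 <= 0 by rewrite invr_le0; lra.
  move: hw0; set w := (2 * C)^-1 => hw0; nra.
- apply: le_trans (norm_labs' L _) _; apply: (norm_mono L (labs_ge0 L _)).
  exact: (@bigsup_ub _ _ L (fun k => labs L (psum e ns eps k)) _ _ (leqnn _)).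
- have H : forall i, (i < size ns)%N -> if eps i == 1 then eps i = 1 else eps i = - 1.
    move=> i hi; case: (heps i hi) => ->; first by rewrite eqxx.
    by case: ifP => [/eqP h|_].
  exact: (split_bound L Hb Hc HC ns (fun _ => 1) eps (fun i => eps i == 1) hu (fun i _ => or_introl erefl) H).
Qed.
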